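(* Let $p,q\in\Bbbk^\times$. Then $D(q)\cong D(p)$ if and only if $p=q^{\pm1}$.
   Context: $\Bbbk$ is an algebraically closed field of characteristic zero. Paths are written left to right. Let $Q$ be the quiver with vertices $e_1,e_2$, arrows $a,c:e_1\to e_2$ and $b,d:e_2\to e_1$; for $q\in\Bbbk^\times$, $D(q)=\Bbbk Q/(ab-(a+c)d,\ ba-q\,dc)$. *)

(* Defs.v *)
From HB Require Import structures.
From mathcomp Require Import all_boot all_order all_algebra.
From mathcomp.multinomials Require Import monalg.

Set Implicit Arguments.
Unset Strict Implicit.
Unset Printing Implicit Defensive.

Import GRing.Theory.
Local Open Scope ring_scope.

(* The free associative K-algebra on the six letters e1, e2, a, b, c, d,
   encoded as the monoid algebra of the free monoid on 'I_6:
   0 = e1, 1 = e2, 2 = a, 3 = b, 4 = c, 5 = d. *)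
Definition FreeAlg (K : fieldType) := {malg K[{fmonom 'I_6}]}.

Definition gen (K : fieldType) (i : 'I_6) : FreeAlg K := << fmu i >>.

Definition ge1 K := @gen K (@Ordinal 6 0 isT).
Definition ge2 K := @gen K (@Ordinal 6 1 isT).
Definition ga  K := @gen K (@Ordinal 6 2 isT).
Definition gb  K := @gen K (@Ordinal 6 3 isT).
Definition gc  K := @gen K (@Ordinal 6 4 isT).
Definition gd  K := @gen K (@Ordinal 6 5 isT).

Definition in_ideal2 (R : nzRingType) (rs : seq R) (x : R) : Prop :=
  exists (n : nat) (u v : 'I_n -> R) (j : 'I_n -> 'I_(size rs)),
    x = \sum_(i < n) u i * rs`_(j i) * v i.

(* Relations presenting the path algebra kQ of the quiver Q
   (vertices e1, e2; arrows a, c : e1 -> e2 and b, d : e2 -> e1; paths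
   written left to right, so that e1 a = a = a e2, etc.) as a quotient of
   the free algebra. *)
Definition quiver_rels (K : fieldType) : seq (FreeAlg K) :=
  let e1 := ge1 K in let e2 := ge2 K in
  let a := ga K in let b := gb K in let c := gc K in let d := gd K in
  [:: e1 * e1 - e1; e2 * e2 - e2; e1 * e2; e2 * e1; e1 + e2 - 1;
      e1 * a - a; a * e2 - a; e1 * c - c; c * e2 - c;
      e2 * b - b; b * e1 - b; e2 * d - d; d * e1 - d].

Definition D_rels (K : fieldType) (q : K) : seq (FreeAlg K) :=
  quiver_rels K ++
  [:: ga K * gb K - (ga K + gc K) * gd K;
      gb K * ga K - q *: (gd K * gc K)].

Definition D_ideal (K : fieldType) (q : K) : FreeAlg K -> Prop :=
  in_ideal2 (D_rels q).

(* K-algebra isomorphism A/I ~= B/J between quotients of K-algebras by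
   (two-sided) ideals, written out on representatives: f represents a map
   A/I -> B/J which is well defined, K-linear, multiplicative, unital,
   injective and surjective. *)
Definition quot_alg_iso (K : fieldType) (A B : lalgType K)
    (I : A -> Prop) (J : B -> Prop) : Prop :=
  exists f : A -> B,
    [/\ (forall x y, I (x - y) -> J (f x - f y)),
         (forall x y, J (f (x + y) - (f x + f y))),
         (forall (k : K) x, J (f (k *: x) - k *: f x)),
         (forall x y, J (f (x * y) - f x * f y))
       & J (f 1 - 1)] /\
    (forall x y, J (f x - f y) -> I (x - y)) /\
    (forall y, exists x, J (f x - y)).

Definition D_iso (K : fieldType) (q p : K) : Prop :=
  quot_alg_iso (D_ideal q) (D_ideal p).

(* Main.v *)
Require Import Defs.
From HB Require Import structures.
From mathcomp Require Import all_boot all_order all_algebra.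
From mathcomp.multinomials Require Import monalg.
From mathcomp Require Import ring finmap.
Import GRing.Theory.
Local Open Scope ring_scope.

Set Implicit Arguments.
Unset Strict Implicit.
Unset Printing Implicit Defensive.

Section Free.
Variable K : fieldType.
Local Notation F := (FreeAlg K).

Lemma word_prod (w : {fmonom 'I_6}) :
  (<< w >> : F) = \prod_(i <- (w : seq 'I_6)) gen K i.
Proof.
case: w => s; elim: s => [|i s IH] /=.
  by rewrite big_nil -fmoneE.
rewrite big_cons -IH /gen malgM_def fgmulUU mulr1.
congr (<< _ *g _ >>); apply/eqP; rewrite fmP fmM fmU /=. done.
Qed.

Lemma scaleU (c : K) (w : {fmonom 'I_6}) : c *: (<< w >> : F) = << c *g w >>.
Proof.
by apply/malgP => k; rewrite mcoeffZ !mcoeffU mulr_natr.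
Qed.

Section Expand.
Variables (R : nzRingType) (s0 : K -> R) (h : F -> R).
Hypotheses (hD : forall x y, h (x + y) = h x + h y)
  (hZ : forall k x, h (k *: x) = s0 k * h x)
  (hM : forall x y, h (x * y) = h x * h y) (h1 : h 1 = 1).

Lemma h0 : h 0 = 0.
Proof. have E := hD 0 0; rewrite addr0 in E; by apply: (addrI (h 0)); rewrite -E addr0. Qed.

Lemma hexpand x : h x = \sum_(w <- msupp x) s0 (x@_w) * \prod_(i <- (w : seq 'I_6)) h (gen K i).
Proof.
rewrite {1}[x]monalgE (big_morph h hD h0); apply: eq_bigr => w _.
rewrite -scaleU hZ word_prod; congr (_ * _).
by rewrite (big_morph h hM h1).
Qed.
End Expand.

Lemma hunique (R : nzRingType) (s0 : K -> R) (h h' : F -> R) :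
  (forall x y, h (x + y) = h x + h y) -> (forall k x, h (k *: x) = s0 k * h x) ->
  (forall x y, h (x * y) = h x * h y) -> h 1 = 1 ->
  (forall x y, h' (x + y) = h' x + h' y) -> (forall k x, h' (k *: x) = s0 k * h' x) ->
  (forall x y, h' (x * y) = h' x * h' y) -> h' 1 = 1 ->
  (forall i, h (gen K i) = h' (gen K i)) -> forall x, h x = h' x.
Proof.
move=> hD hZ hM h1 hD' hZ' hM' h1' hg x.
rewrite (hexpand hD hZ hM h1) (hexpand hD' hZ' hM' h1').
by apply: eq_bigr => w _; congr (_ * _); apply: eq_bigr.
Qed.

Lemma hderiv (R : nzRingType) (s0 : K -> R) (h : F -> R)
  (phi psi1 psi2 : R -> K) :
  (forall x y, h (x + y) = h x + h y) -> (forall k x, h (k *: x) = s0 k * h x) ->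
  (forall x y, h (x * y) = h x * h y) -> h 1 = 1 ->
  (forall x y, phi (x + y) = phi x + phi y) ->
  (forall k x, phi (s0 k * x) = k * phi x) ->
  (forall x y, phi (x * y) = psi1 x * phi y + phi x * psi2 y) ->
  phi 1 = 0 -> phi 0 = 0 ->
  (forall i, phi (h (gen K i)) = 0) -> forall x, phi (h x) = 0.
Proof.
move=> hD hZ hM h1 pD pZ pM p1 p0 pg x.
rewrite (hexpand hD hZ hM h1) (big_morph phi pD p0) big1 // => w _.
rewrite pZ; apply/eqP; rewrite mulf_eq0; apply/orP; right; apply/eqP.
elim: (w : seq _) => [|i s IH]; first by rewrite big_nil.
by rewrite big_cons pM IH pg mulr0 mul0r addr0.
Qed.

End Free.
Section Ideal.
Variables (R : nzRingType) (rs : seq R).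
Local Notation I := (in_ideal2 rs).
Lemma ideal0 : I 0.
Proof.
exists 0%N, (fun _ => 0), (fun _ => 0), (fun i : 'I_0 => False_rect 'I_(size rs) ltac:(case: i => m; rewrite ltn0 //)).
by rewrite big_ord0.
Qed.
Lemma idealD x y : I x -> I y -> I (x + y).
Proof.
move=> [n1 [u1 [v1 [j1 ->]]]] [n2 [u2 [v2 [j2 ->]]]].
exists (n1 + n2)%N.
exists (fun i => match split i with inl i1 => u1 i1 | inr i2 => u2 i2 end).
exists (fun i => match split i with inl i1 => v1 i1 | inr i2 => v2 i2 end).
exists (fun i => match split i with inl i1 => j1 i1 | inr i2 => j2 i2 end).
rewrite big_split_ord /=; congr (_ + _); apply: eq_bigr => i _.
  by rewrite -[lshift _ _]/(unsplit (inl i)) unsplitK.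
by rewrite -[rshift _ _]/(unsplit (inr i)) unsplitK.
Qed.
Lemma idealM a b x : I x -> I (a * x * b).
Proof.
move=> [n [u [v [j ->]]]].
exists n, (fun i => a * u i), (fun i => v i * b), j.
rewrite mulr_sumr mulr_suml; apply: eq_bigr => i _; by rewrite !mulrA.
Qed.
Lemma idealN x : I x -> I (- x).
Proof. by move=> H; rewrite -mulN1r -[_ * x]mulr1; apply: idealM. Qed.
Lemma idealB x y : I x -> I y -> I (x - y).
Proof. by move=> Hx Hy; apply: idealD => //; apply: idealN. Qed.
Lemma idealG (j : 'I_(size rs)) : I (rs`_j).
Proof.
exists 1%N, (fun _ => 1), (fun _ => 1), (fun _ => j).
by rewrite big_ord1 mul1r mulr1.
Qed.
Lemma idealG' k : (k < size rs)%N -> I (rs`_k).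
Proof. by move=> H; apply: (idealG (Ordinal H)). Qed.
Lemma ideal_sum (J : Type) (s : seq J) (f : J -> R) :
  (forall j, I (f j)) -> I (\sum_(j <- s) f j).
Proof.
move=> H; elim: s => [|a s IH]; first by rewrite big_nil; apply: ideal0.
by rewrite big_cons; apply: idealD.
Qed.
End Ideal.

Lemma idealZ (K : fieldType) (rs : seq (FreeAlg K)) k x :
  in_ideal2 rs x -> in_ideal2 rs (k *: x).
Proof. by move=> H; rewrite -mul_malgC -[_ * x]mulr1; apply: idealM. Qed.

Section Easy.
Variable K : fieldType.
Local Notation F := (FreeAlg K).

Lemma malgC_comm (c : K) (g : F) : g * c%:MP = c *: g.
Proof.
rewrite malgM_def fgmulgU malgZ_def /fgscale; apply: eq_bigr => k _.
by rewrite mulm1 mulrC.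
Qed.
Lemma scalerAr' (k : K) (x y : F) : x * (k *: y) = k *: (x * y).
Proof. by rewrite -!mul_malgC mulrA malgC_comm mul_malgC -scalerAl. Qed.

Definition img (t : K) (i : 'I_6) : F :=
  match val i with
  | 0 => ge1 K
  | 1 => ge2 K
  | 2 => t *: ga K + (t - 1) *: gc K
  | 3 => t *: gb K + 0 *: gd K
  | 4 => 0 *: ga K + 1 *: gc K
  | _ => (t - 1) *: gb K + 1 *: gd K
  end.

Definition hwF t (w : {fmonom 'I_6}) : F := \prod_(i <- (w : seq 'I_6)) img t i.
Lemma hwF_mmorph t : mmorphism (hwF t).
Proof.
split; last by rewrite /hwF fm1 big_nil.
by move=> x y; rewrite /hwF fmM big_cat.
Qed.
HB.instance Definition _ t := isMultiplicative.Build _ _ (hwF t) (hwF_mmorph t).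

Definition Fm_def (t : K) (x : F) : F := mmap (@malgC _ K) (hwF t) x.
Fact Fm_key : unit. Proof. by []. Qed.
Definition Fm := locked_with Fm_key Fm_def.
Lemma FmE : Fm = Fm_def. Proof. exact: locked_withE. Qed.

Lemma FmD t x y : Fm t (x + y) = Fm t x + Fm t y. Proof. rewrite FmE; exact: raddfD. Qed.
Lemma FmB t x y : Fm t (x - y) = Fm t x - Fm t y. Proof. rewrite FmE; exact: raddfB. Qed.
Lemma FmZ t k x : Fm t (k *: x) = k%:MP * Fm t x. Proof. rewrite FmE; exact: mmapZ. Qed.
Lemma FmZ' t k x : Fm t (k *: x) = k *: Fm t x. Proof. by rewrite FmZ mul_malgC. Qed.
Lemma FmM t x y : Fm t (x * y) = Fm t x * Fm t y.
Proof.
rewrite FmE.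
have M := @commr_mmap_is_multiplicative _ _ _ (@malgC _ K) (hwF t)
  (fun g m m' => etrans (mul_malgC _ _) (esym (malgC_comm _ _))).
exact: M.1.
Qed.
Lemma Fm1 t : Fm t 1 = 1. Proof. rewrite FmE; exact: mmap1. Qed.
Lemma Fmgen t i : Fm t (gen K i) = img t i.
Proof. rewrite FmE /Fm_def /gen mmapU /hwF fmU big_seq1 [X in X * _](_ : _ = 1) ?mul1r //; exact: mpolyC1E. Qed.

Lemma comb2 (V : lmodType K) (u v : V) (t s a b c d : K) :
  t *: (a *: u + b *: v) + s *: (c *: u + d *: v) =
  (t * a + s * c) *: u + (t * b + s * d) *: v.
Proof. by rewrite !scalerDr !scalerA addrACA -!scalerDl. Qed.
Lemma combL (V : lmodType K) (u v : V) (a b : K) : a = 1 -> b = 0 -> a *: u + b *: v = u.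
Proof. by move=> -> ->; rewrite scale1r scale0r addr0. Qed.
Lemma combR (V : lmodType K) (u v : V) (a b : K) : a = 0 -> b = 1 -> a *: u + b *: v = v.
Proof. by move=> -> ->; rewrite scale1r scale0r add0r. Qed.

Lemma FmLin t (a b : K) (x y : F) : Fm t (a *: x + b *: y) = a *: Fm t x + b *: Fm t y.
Proof. by rewrite FmD; congr (_ + _); exact: FmZ'. Qed.
Lemma Fm_e1 t : Fm t (ge1 K) = ge1 K. Proof. exact: Fmgen. Qed.
Lemma Fm_e2 t : Fm t (ge2 K) = ge2 K. Proof. exact: Fmgen. Qed.
Lemma Fm_a t : Fm t (ga K) = t *: ga K + (t - 1) *: gc K. Proof. exact: Fmgen. Qed.
Lemma Fm_b t : Fm t (gb K) = t *: gb K + 0 *: gd K. Proof. exact: Fmgen. Qed.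
Lemma Fm_c t : Fm t (gc K) = 0 *: ga K + 1 *: gc K. Proof. exact: Fmgen. Qed.
Lemma Fm_d t : Fm t (gd K) = (t - 1) *: gb K + 1 *: gd K. Proof. exact: Fmgen. Qed.
Lemma FFgen t i : t != 0 -> Fm t^-1 (Fm t (gen K i)) = gen K i.
Proof.
move=> t0; rewrite Fmgen.
case: i => [[|[|[|[|[|[|//]]]]]] H]; rewrite /img /= ?Fmgen //.
1,2: by rewrite /img /=; congr (gen K _); apply: val_inj.
- by rewrite FmLin Fm_a Fm_c comb2 combL; [congr (gen K _); apply: val_inj | field | field].
- by rewrite FmLin Fm_b Fm_d comb2 combL; [congr (gen K _); apply: val_inj | field | field].
- by rewrite FmLin Fm_a Fm_c comb2 combR; [congr (gen K _); apply: val_inj | field | field].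
- by rewrite FmLin Fm_b Fm_d comb2 combR; [congr (gen K _); apply: val_inj | field | field].
Qed.
Lemma FFid t x : t != 0 -> Fm t^-1 (Fm t x) = x.
Proof.
move=> t0.
apply: (@hunique K _ (@malgC _ K) (fun x => Fm t^-1 (Fm t x)) id).
- by move=> ? ?; rewrite !FmD.
- by move=> ? ?; rewrite FmZ' FmZ.
- by move=> ? ?; rewrite !FmM.
- by rewrite !Fm1.
- by [].
- by move=> ? ?; rewrite mul_malgC.
- by [].
- by [].
- by move=> i; apply: FFgen.
Qed.
Definition c4 (V : lmodType K) (k1 k2 k3 k4 : K) (u1 u2 u3 u4 : V) :=
  k1 *: u1 + k2 *: u2 + k3 *: u3 + k4 *: u4.
Lemma c4B (V : lmodType K) k1 k2 k3 k4 m1 m2 m3 m4 (u1 u2 u3 u4 : V) :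
  c4 k1 k2 k3 k4 u1 u2 u3 u4 - c4 m1 m2 m3 m4 u1 u2 u3 u4 =
  c4 (k1 - m1) (k2 - m2) (k3 - m3) (k4 - m4) u1 u2 u3 u4.
Proof.
rewrite /c4 !scalerBl.
rewrite opprD addrACA; congr (_ + _); rewrite opprD addrACA; congr (_ + _).
by rewrite opprD addrACA.
Qed.
Lemma c4Z (V : lmodType K) s k1 k2 k3 k4 (u1 u2 u3 u4 : V) :
  s *: c4 k1 k2 k3 k4 u1 u2 u3 u4 = c4 (s * k1) (s * k2) (s * k3) (s * k4) u1 u2 u3 u4.
Proof. by rewrite /c4 !scalerDr !scalerA. Qed.
Lemma c4E (V : lmodType K) k1 k2 k3 k4 m1 m2 m3 m4 (u1 u2 u3 u4 : V) :
  k1 = m1 -> k2 = m2 -> k3 = m3 -> k4 = m4 ->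
  c4 k1 k2 k3 k4 u1 u2 u3 u4 = c4 m1 m2 m3 m4 u1 u2 u3 u4.
Proof. by move=> -> -> -> ->. Qed.
Lemma combD (V : lmodType K) (u v : V) a b c d :
  (a *: u + b *: v) + (c *: u + d *: v) = (a + c) *: u + (b + d) *: v.
Proof. by rewrite addrACA -!scalerDl. Qed.

End Easy.

Section Gen.
Variables (K : fieldType) (V : lalgType K).
Hypothesis hAr : forall (k : K) (x y : V), x * (k *: y) = k *: (x * y).
Lemma bilin (x1 x2 y1 y2 : V) a b c d :
  (a *: x1 + b *: x2) * (c *: y1 + d *: y2) =
  c4 (a * c) (a * d) (b * c) (b * d) (x1 * y1) (x1 * y2) (x2 * y1) (x2 * y2).
Proof.
rewrite /c4 mulrDl !mulrDr -!scalerAl !hAr !scalerA !addrA.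
by rewrite [b * c]mulrC [b * d]mulrC [a * c]mulrC [a * d]mulrC.
Qed.

Lemma linL (x y z : V) a b :
  x * (a *: y + b *: z) - (a *: y + b *: z) = a *: (x * y - y) + b *: (x * z - z).
Proof. by rewrite mulrDr !hAr opprD addrACA !scalerBr. Qed.
Lemma linR (x y z : V) a b :
  (a *: y + b *: z) * x - (a *: y + b *: z) = a *: (y * x - y) + b *: (z * x - z).
Proof. by rewrite mulrDl -!scalerAl opprD addrACA !scalerBr. Qed.

Lemma rel13_id (a b c d : V) t :
  (t *: a + (t - 1) *: c) * (t *: b + 0 *: d) -
  ((t *: a + (t - 1) *: c) + (0 *: a + 1 *: c)) * ((t - 1) *: b + 1 *: d) =
  t *: (a * b - (a + c) * d).
Proof.
rewrite combD !bilin c4B.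
have -> : t *: (a * b - (a + c) * d) = c4 t (- t) 0 (- t) (a * b) (a * d) (c * b) (c * d).
  by rewrite /c4 scale0r addr0 !scaleNr mulrDl scalerBr scalerDr opprD addrA.
by apply: c4E; ring.
Qed.

Lemma rel14_id (a b c d : V) t : t != 0 ->
  (t *: b + 0 *: d) * (t *: a + (t - 1) *: c) -
  t *: (((t - 1) *: b + 1 *: d) * (0 *: a + 1 *: c)) =
  (t ^+ 2) *: (b * a - t^-1 *: (d * c)).
Proof.
move=> t0; rewrite !bilin c4Z c4B.
have -> : (t ^+ 2) *: (b * a - t^-1 *: (d * c)) =
  c4 (t ^+ 2) 0 0 (- (t ^+ 2 * t^-1)) (b * a) (b * c) (d * a) (d * c).
  by rewrite /c4 !scale0r !addr0 scalerBr scalerA scaleNr.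
by apply: c4E; field.
Qed.
End Gen.

Lemma inI (R : nzRingType) (rs : seq R) k y :
  (k < size rs)%N -> rs`_k = y -> in_ideal2 rs y.
Proof. by move=> H <-; apply: idealG'. Qed.


Section EasyRel.
Variable K : fieldType.
Local Notation F := (FreeAlg K).
Lemma FmXYmZ t (x y z : F) : Fm t (x * y - z) = Fm t x * Fm t y - Fm t z.
Proof. by rewrite FmB FmM. Qed.
Lemma FmXY t (x y : F) : Fm t (x * y) = Fm t x * Fm t y.
Proof. exact: FmM. Qed.
Lemma FmXYm1 t (x y : F) : Fm t (x + y - 1) = Fm t x + Fm t y - 1.
Proof. by rewrite FmB FmD Fm1. Qed.
Lemma FmR13 t (a b c d : F) :
  Fm t (a * b - (a + c) * d) = Fm t a * Fm t b - (Fm t a + Fm t c) * Fm t d.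
Proof. rewrite FmB; congr (_ - _); first exact: FmM. by rewrite FmM FmD. Qed.
Lemma FmR14 t (a b c d : F) s :
  Fm t (b * a - s *: (d * c)) = Fm t b * Fm t a - s *: (Fm t d * Fm t c).
Proof. rewrite FmB; congr (_ - _); first exact: FmM. by rewrite FmZ' FmM. Qed.

Lemma Frel0 t : t != 0 -> in_ideal2 (D_rels t^-1) (Fm t (@D_rels K t)`_0).
Proof.
move=> t0.
have -> : (D_rels t)`_0 = ge1 K * ge1 K - ge1 K by [].
by rewrite FmXYmZ !Fm_e1; apply: (inI (k:=0)).
Qed.

Lemma Frel1 t : t != 0 -> in_ideal2 (D_rels t^-1) (Fm t (@D_rels K t)`_1).
Proof.
move=> t0.
have -> : (D_rels t)`_1 = ge2 K * ge2 K - ge2 K by [].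
by rewrite FmXYmZ !Fm_e2; apply: (inI (k:=1)).
Qed.

Lemma Frel2 t : t != 0 -> in_ideal2 (D_rels t^-1) (Fm t (@D_rels K t)`_2).
Proof.
move=> t0.
have -> : (D_rels t)`_2 = ge1 K * ge2 K by [].
by rewrite FmXY Fm_e1 Fm_e2; apply: (inI (k:=2)).
Qed.

Lemma Frel3 t : t != 0 -> in_ideal2 (D_rels t^-1) (Fm t (@D_rels K t)`_3).
Proof.
move=> t0.
have -> : (D_rels t)`_3 = ge2 K * ge1 K by [].
by rewrite FmXY Fm_e1 Fm_e2; apply: (inI (k:=3)).
Qed.

Lemma Frel4 t : t != 0 -> in_ideal2 (D_rels t^-1) (Fm t (@D_rels K t)`_4).
Proof.
move=> t0.
have -> : (D_rels t)`_4 = ge1 K + ge2 K - 1 by [].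
by rewrite FmXYm1 Fm_e1 Fm_e2; apply: (inI (k:=4)).
Qed.

Lemma Frel5 t : t != 0 -> in_ideal2 (D_rels t^-1) (Fm t (@D_rels K t)`_5).
Proof.
move=> t0.
have -> : (D_rels t)`_5 = ge1 K * ga K - ga K by [].
rewrite FmXYmZ Fm_e1 Fm_a (linL (@scalerAr' K)).
by apply: idealD; apply: idealZ; [apply: (inI (k:=5)) | apply: (inI (k:=7))].
Qed.

Lemma Frel6 t : t != 0 -> in_ideal2 (D_rels t^-1) (Fm t (@D_rels K t)`_6).
Proof.
move=> t0.
have -> : (D_rels t)`_6 = ga K * ge2 K - ga K by [].
rewrite FmXYmZ Fm_e2 Fm_a linR.
by apply: idealD; apply: idealZ; [apply: (inI (k:=6)) | apply: (inI (k:=8))].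
Qed.

Lemma Frel7 t : t != 0 -> in_ideal2 (D_rels t^-1) (Fm t (@D_rels K t)`_7).
Proof.
move=> t0.
have -> : (D_rels t)`_7 = ge1 K * gc K - gc K by [].
rewrite FmXYmZ Fm_e1 Fm_c (linL (@scalerAr' K)).
by apply: idealD; apply: idealZ; [apply: (inI (k:=5)) | apply: (inI (k:=7))].
Qed.

Lemma Frel8 t : t != 0 -> in_ideal2 (D_rels t^-1) (Fm t (@D_rels K t)`_8).
Proof.
move=> t0.
have -> : (D_rels t)`_8 = gc K * ge2 K - gc K by [].
rewrite FmXYmZ Fm_e2 Fm_c linR.
by apply: idealD; apply: idealZ; [apply: (inI (k:=6)) | apply: (inI (k:=8))].
Qed.

Lemma Frel9 t : t != 0 -> in_ideal2 (D_rels t^-1) (Fm t (@D_rels K t)`_9).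
Proof.
move=> t0.
have -> : (D_rels t)`_9 = ge2 K * gb K - gb K by [].
rewrite FmXYmZ Fm_e2 Fm_b (linL (@scalerAr' K)).
by apply: idealD; apply: idealZ; [apply: (inI (k:=9)) | apply: (inI (k:=11))].
Qed.

Lemma Frel10 t : t != 0 -> in_ideal2 (D_rels t^-1) (Fm t (@D_rels K t)`_10).
Proof.
move=> t0.
have -> : (D_rels t)`_10 = gb K * ge1 K - gb K by [].
rewrite FmXYmZ Fm_e1 Fm_b linR.
by apply: idealD; apply: idealZ; [apply: (inI (k:=10)) | apply: (inI (k:=12))].
Qed.

Lemma Frel11 t : t != 0 -> in_ideal2 (D_rels t^-1) (Fm t (@D_rels K t)`_11).
Proof.
move=> t0.
have -> : (D_rels t)`_11 = ge2 K * gd K - gd K by [].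
rewrite FmXYmZ Fm_e2 Fm_d (linL (@scalerAr' K)).
by apply: idealD; apply: idealZ; [apply: (inI (k:=9)) | apply: (inI (k:=11))].
Qed.

Lemma Frel12 t : t != 0 -> in_ideal2 (D_rels t^-1) (Fm t (@D_rels K t)`_12).
Proof.
move=> t0.
have -> : (D_rels t)`_12 = gd K * ge1 K - gd K by [].
rewrite FmXYmZ Fm_e1 Fm_d linR.
by apply: idealD; apply: idealZ; [apply: (inI (k:=10)) | apply: (inI (k:=12))].
Qed.

Lemma Frel13 t : t != 0 -> in_ideal2 (D_rels t^-1) (Fm t (@D_rels K t)`_13).
Proof.
move=> t0.
have -> : (D_rels t)`_13 = ga K * gb K - (ga K + gc K) * gd K by [].
rewrite FmR13 Fm_a Fm_b Fm_c Fm_d (rel13_id (@scalerAr' K)).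
by apply: idealZ; apply: (inI (k:=13)).
Qed.

Lemma Frel14 t : t != 0 -> in_ideal2 (D_rels t^-1) (Fm t (@D_rels K t)`_14).
Proof.
move=> t0.
have -> : (D_rels t)`_14 = gb K * ga K - t *: (gd K * gc K) by [].
rewrite FmR14 Fm_a Fm_b Fm_c Fm_d (rel14_id (@scalerAr' K)) //.
by apply: idealZ; apply: (inI (k:=14)).
Qed.

Lemma Frel t (k : nat) : t != 0 -> (k < 15)%N ->
  in_ideal2 (D_rels t^-1) (Fm t (@D_rels K t)`_k).
Proof.
move=> t0; case: k => [|[|[|[|[|[|[|[|[|[|[|[|[|[|[|//]]]]]]]]]]]]]]] _.
- exact: Frel0.
- exact: Frel1.
- exact: Frel2.
- exact: Frel3.
- exact: Frel4.
- exact: Frel5.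
- exact: Frel6.
- exact: Frel7.
- exact: Frel8.
- exact: Frel9.
- exact: Frel10.
- exact: Frel11.
- exact: Frel12.
- exact: Frel13.
- exact: Frel14.
Qed.
End EasyRel.

Section EasyMain.
Variable K : fieldType.
Local Notation F := (FreeAlg K).
Lemma Fm0 (t : K) : Fm t (0 : F) = 0.
Proof. by rewrite FmE; exact: raddf0. Qed.

Lemma Fideal (t : K) x : t != 0 -> D_ideal t x -> D_ideal t^-1 (Fm t x).
Proof.
move=> t0 [n [u [v [j ->]]]].
rewrite (big_morph (Fm t) (FmD t) (Fm0 t)).
rewrite /D_ideal.
apply: (big_ind (fun z => in_ideal2 (D_rels t^-1) z)); first exact: ideal0.
  by move=> x1 y1; apply: idealD.
move=> i _; rewrite FmM FmM; apply: idealM; apply: Frel => //.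
Qed.

Lemma easy_iso (q : K) : q != 0 -> D_iso q q^-1.
Proof.
move=> q0; rewrite /D_iso /quot_alg_iso /D_ideal.
exists (Fm q); split; [split | split].
- by move=> x y H; rewrite -FmB; apply: Fideal.
- by move=> x y; rewrite FmD subrr; apply: ideal0.
- by move=> k x; rewrite FmZ' subrr; apply: ideal0.
- by move=> x y; rewrite FmM subrr; apply: ideal0.
- by rewrite Fm1 subrr; apply: ideal0.
- move=> x y H.
  have := Fideal (invr_neq0 q0) H; rewrite /D_ideal.
  by rewrite invrK FmB (FFid x q0) (FFid y q0).
- move=> y; exists (Fm q^-1 y).
  have := FFid y (invr_neq0 q0); rewrite invrK => ->.
  by rewrite subrr; apply: ideal0.
Qed.

Lemma id_iso (q : K) : D_iso q q.
Proof.
rewrite /D_iso /quot_alg_iso /D_ideal.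
exists id; split; [split | split].
- by [].
- by move=> x y; rewrite subrr; apply: ideal0.
- by move=> k x; rewrite subrr; apply: ideal0.
- by move=> x y; rewrite subrr; apply: ideal0.
- by rewrite subrr; apply: ideal0.
- by [].
- by move=> y; exists y; rewrite subrr; apply: ideal0.
Qed.
End EasyMain.


Record Tc (K : Type) := MkT { x1 : K; x2 : K; xa : K; xc : K; xb : K; xd : K;
  xab : K; xcb : K; xcd : K; xbc : K; xda : K; xdc : K }.

Definition T (K : fieldType) (p : K) := Tc K.

Section TAlg.
Variables (K : fieldType) (p : K).

Definition Tenc (t : T p) :=
  (x1 t, x2 t, xa t, xc t, xb t, xd t, (xab t, xcb t, xcd t, xbc t, xda t, xdc t)).
Definition Tdec (s : K * K * K * K * K * K * (K * K * K * K * K * K)) : T p :=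
  let: (a1, a2, a3, a4, a5, a6, (b1, b2, b3, b4, b5, b6)) := s in
  MkT a1 a2 a3 a4 a5 a6 b1 b2 b3 b4 b5 b6.
Lemma TencK : cancel Tenc Tdec. Proof. by case. Qed.
HB.instance Definition _ := Choice.copy (T p) (can_type TencK).

Definition zeroT : T p := MkT 0 0 0 0 0 0 0 0 0 0 0 0.
Definition oneT : T p := MkT 1 1 0 0 0 0 0 0 0 0 0 0.
Definition addT (x y : T p) : T p :=
  MkT (x1 x + x1 y) (x2 x + x2 y) (xa x + xa y) (xc x + xc y) (xb x + xb y)
      (xd x + xd y) (xab x + xab y) (xcb x + xcb y) (xcd x + xcd y)
      (xbc x + xbc y) (xda x + xda y) (xdc x + xdc y).
Definition oppT (x : T p) : T p :=
  MkT (- x1 x) (- x2 x) (- xa x) (- xc x) (- xb x) (- xd x) (- xab x) (- xcb x)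
      (- xcd x) (- xbc x) (- xda x) (- xdc x).
Definition mulT (x y : T p) : T p :=
  MkT (x1 x * x1 y) (x2 x * x2 y)
      (x1 x * xa y + xa x * x2 y) (x1 x * xc y + xc x * x2 y)
      (x2 x * xb y + xb x * x1 y) (x2 x * xd y + xd x * x1 y)
      (x1 x * xab y + xab x * x1 y + xa x * xb y + xa x * xd y)
      (x1 x * xcb y + xcb x * x1 y + xc x * xb y)
      (x1 x * xcd y + xcd x * x1 y + xc x * xd y - xa x * xd y)
      (x2 x * xbc y + xbc x * x2 y + xb x * xc y)
      (x2 x * xda y + xda x * x2 y + xd x * xa y)
      (x2 x * xdc y + xdc x * x2 y + p * (xb x * xa y) + xd x * xc y).

Ltac tsolve := rewrite /associative /commutative /left_id /right_id
  /left_inverse /left_distributive /right_distributive;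
  repeat (let t := fresh in intro t; destruct t);
  rewrite /addT /oppT /mulT /zeroT /oneT /=; congr MkT; ring.

Lemma addTA : associative addT. Proof. tsolve. Qed.
Lemma addTC : commutative addT. Proof. tsolve. Qed.
Lemma add0T : left_id zeroT addT. Proof. tsolve. Qed.
Lemma addNT : left_inverse zeroT oppT addT. Proof. tsolve. Qed.
Lemma mulTA : associative mulT. Proof. tsolve. Qed.
Lemma mul1T : left_id oneT mulT. Proof. tsolve. Qed.
Lemma mulT1 : right_id oneT mulT. Proof. tsolve. Qed.
Lemma mulTDl : left_distributive mulT addT. Proof. tsolve. Qed.
Lemma mulTDr : right_distributive mulT addT. Proof. tsolve. Qed.
Lemma oneT_neq0 : oneT != zeroT.
Proof. by apply/eqP => -[] /eqP; rewrite oner_eq0. Qed.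

HB.instance Definition _ := GRing.isNzRing.Build (T p) addTA addTC add0T addNT
  mulTA mul1T mulT1 mulTDl mulTDr oneT_neq0.

Lemma mulTE (x y : T p) : x * y = mulT x y. Proof. by []. Qed.
Lemma addTE (x y : T p) : x + y = addT x y. Proof. by []. Qed.
Lemma oppTE (x : T p) : - x = oppT x. Proof. by []. Qed.
Lemma oneTE : 1 = oneT. Proof. by []. Qed.
Lemma zeroTE : 0 = zeroT. Proof. by []. Qed.

Definition sc (k : K) : T p := MkT k k 0 0 0 0 0 0 0 0 0 0.
Lemma sc_add : zmod_morphism sc.
Proof. by move=> x y; rewrite addTE oppTE /addT /oppT /sc /=; congr MkT; ring. Qed.
HB.instance Definition _ := GRing.isZmodMorphism.Build K (T p) sc sc_add.
Lemma sc_mul : monoid_morphism sc.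
Proof. by split => [//|x y]; rewrite mulTE /mulT /sc /=; congr MkT; ring. Qed.
HB.instance Definition _ := GRing.isMonoidMorphism.Build K (T p) sc sc_mul.
Lemma sc_comm k (t : T p) : sc k * t = t * sc k.
Proof. by case: t => *; rewrite !mulTE /mulT /sc /=; congr MkT; ring. Qed.
End TAlg.

Section Pi.
Variables (K : fieldType) (p : K).
Definition genT (i : 'I_6) : T p :=
  match val i with
  | 0 => MkT 1 0 0 0 0 0 0 0 0 0 0 0
  | 1 => MkT 0 1 0 0 0 0 0 0 0 0 0 0
  | 2 => MkT 0 0 1 0 0 0 0 0 0 0 0 0
  | 3 => MkT 0 0 0 0 1 0 0 0 0 0 0 0
  | 4 => MkT 0 0 0 1 0 0 0 0 0 0 0 0
  | _ => MkT 0 0 0 0 0 1 0 0 0 0 0 0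
  end.
Definition hw (w : {fmonom 'I_6}) : T p := \prod_(i <- (w : seq 'I_6)) genT i.
Lemma hw_mmorph : mmorphism hw.
Proof.
split; last by rewrite /hw fm1 big_nil.
by move=> x y; rewrite /hw fmM big_cat.
Qed.
HB.instance Definition _ := isMultiplicative.Build _ _ hw hw_mmorph.

Definition piT_def (x : FreeAlg K) : T p := mmap (sc p) hw x.
Fact piT_key : unit. Proof. by []. Qed.
Definition piT := locked_with piT_key piT_def.
Lemma piTE : piT = piT_def. Proof. exact: locked_withE. Qed.

Lemma piD x y : piT (x + y) = piT x + piT y. Proof. rewrite piTE; exact: raddfD. Qed.
Lemma piB x y : piT (x - y) = piT x - piT y. Proof. rewrite piTE; exact: raddfB. Qed.
Lemma pi0 : piT 0 = 0. Proof. rewrite piTE; exact: raddf0. Qed.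
Lemma piZ k x : piT (k *: x) = sc p k * piT x. Proof. rewrite piTE; exact: mmapZ. Qed.
Lemma piM x y : piT (x * y) = piT x * piT y.
Proof.
rewrite piTE.
have M := @commr_mmap_is_multiplicative _ _ _ (sc p) hw
  (fun g m m' => sc_comm _ _).
exact: M.1.
Qed.
Lemma pi1 : piT 1 = 1. Proof. rewrite piTE; exact: mmap1. Qed.
Lemma pigen i : piT (gen K i) = genT i.
Proof. rewrite piTE /piT_def /gen mmapU. rewrite /hw fmU big_seq1 [X in X * _](_ : _ = 1) ?mul1r //. Qed.
End Pi.

Section Mk.
Variables (K : fieldType) (p : K).
Lemma mulMk (a1 a2 a3 a4 a5 a6 a7 a8 a9 a10 a11 a12 b1 b2 b3 b4 b5 b6 b7 b8 b9 b10 b11 b12 : K) :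
  (MkT a1 a2 a3 a4 a5 a6 a7 a8 a9 a10 a11 a12 : T p) * MkT b1 b2 b3 b4 b5 b6 b7 b8 b9 b10 b11 b12 =
  MkT (a1 * b1) (a2 * b2) (a1 * b3 + a3 * b2) (a1 * b4 + a4 * b2)
      (a2 * b5 + a5 * b1) (a2 * b6 + a6 * b1)
      (a1 * b7 + a7 * b1 + a3 * b5 + a3 * b6)
      (a1 * b8 + a8 * b1 + a4 * b5)
      (a1 * b9 + a9 * b1 + a4 * b6 - a3 * b6)
      (a2 * b10 + a10 * b2 + a5 * b4)
      (a2 * b11 + a11 * b2 + a6 * b3)
      (a2 * b12 + a12 * b2 + p * (a5 * b3) + a6 * b4).
Proof. by []. Qed.
Lemma addMk (a1 a2 a3 a4 a5 a6 a7 a8 a9 a10 a11 a12 b1 b2 b3 b4 b5 b6 b7 b8 b9 b10 b11 b12 : K) :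
  (MkT a1 a2 a3 a4 a5 a6 a7 a8 a9 a10 a11 a12 : T p) + MkT b1 b2 b3 b4 b5 b6 b7 b8 b9 b10 b11 b12 =
  MkT (a1 + b1) (a2 + b2) (a3 + b3) (a4 + b4) (a5 + b5) (a6 + b6) (a7 + b7) (a8 + b8)
      (a9 + b9) (a10 + b10) (a11 + b11) (a12 + b12).
Proof. by []. Qed.
Lemma oppMk (a1 a2 a3 a4 a5 a6 a7 a8 a9 a10 a11 a12 : K) :
  - (MkT a1 a2 a3 a4 a5 a6 a7 a8 a9 a10 a11 a12 : T p) =
  MkT (- a1) (- a2) (- a3) (- a4) (- a5) (- a6) (- a7) (- a8) (- a9) (- a10) (- a11) (- a12).
Proof. by []. Qed.
Lemma oneMk : (1 : T p) = MkT 1 1 0 0 0 0 0 0 0 0 0 0. Proof. by []. Qed.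
Lemma zeroMk : (0 : T p) = MkT 0 0 0 0 0 0 0 0 0 0 0 0. Proof. by []. Qed.
Lemma scMk k : sc p k = MkT k k 0 0 0 0 0 0 0 0 0 0. Proof. by []. Qed.
End Mk.

Section Phi.
Variables (K : fieldType) (p : K).
Implicit Types (x y : T p).
Definition phiac (s na nc u v : K) (t : T p) :=
  u * (xa t - s * (x1 t - x2 t) * na) + v * (xc t - s * (x1 t - x2 t) * nc).
Definition phibd (s nb nd u v : K) (t : T p) :=
  u * (xb t - s * (x1 t - x2 t) * nb) + v * (xd t - s * (x1 t - x2 t) * nd).
Ltac tcs := repeat (let t := fresh in intro t; try destruct t);
  rewrite ?mulTE ?addTE ?oppTE ?oneTE ?zeroTE /phiac /phibd /mulT /addT /oppT /oneT /zeroT /sc /=.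
Lemma phiacD s na nc u v x y : phiac s na nc u v (x + y) = phiac s na nc u v x + phiac s na nc u v y.
Proof. move: x y; tcs; ring. Qed.
Lemma phiacZ s na nc u v k x : phiac s na nc u v (sc p k * x) = k * phiac s na nc u v x.
Proof. move: x; tcs; ring. Qed.
Lemma phiacM s na nc u v x y :
  phiac s na nc u v (x * y) = x1 x * phiac s na nc u v y + phiac s na nc u v x * x2 y.
Proof. move: x y; tcs; ring. Qed.
Lemma phiac1 s na nc u v : phiac s na nc u v 1 = 0.
Proof. tcs; ring. Qed.
Lemma phiac0 s na nc u v : phiac s na nc u v 0 = 0.
Proof. tcs; ring. Qed.
Lemma phibdD s na nc u v x y : phibd s na nc u v (x + y) = phibd s na nc u v x + phibd s na nc u v y.
Proof. move: x y; tcs; ring. Qed.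
Lemma phibdZ s na nc u v k x : phibd s na nc u v (sc p k * x) = k * phibd s na nc u v x.
Proof. move: x; tcs; ring. Qed.
Lemma phibdM s na nc u v x y :
  phibd s na nc u v (x * y) = x2 x * phibd s na nc u v y + phibd s na nc u v x * x1 y.
Proof. move: x y; tcs; ring. Qed.
Lemma phibd1 s na nc u v : phibd s na nc u v 1 = 0.
Proof. tcs; ring. Qed.
Lemma phibd0 s na nc u v : phibd s na nc u v 0 = 0.
Proof. tcs; ring. Qed.
End Phi.

Section PiRel.
Variables (K : fieldType) (p : K).
Local Notation F := (FreeAlg K).
Local Notation pi := (@piT K p).
Definition tE1 : T p := MkT 1 0 0 0 0 0 0 0 0 0 0 0.
Definition tE2 : T p := MkT 0 1 0 0 0 0 0 0 0 0 0 0.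
Definition tA : T p := MkT 0 0 1 0 0 0 0 0 0 0 0 0.
Definition tC : T p := MkT 0 0 0 1 0 0 0 0 0 0 0 0.
Definition tB : T p := MkT 0 0 0 0 1 0 0 0 0 0 0 0.
Definition tD : T p := MkT 0 0 0 0 0 1 0 0 0 0 0 0.
Lemma pi_e1 : pi (ge1 K) = tE1. Proof. exact: pigen. Qed.
Lemma pi_e2 : pi (ge2 K) = tE2. Proof. exact: pigen. Qed.
Lemma pi_a : pi (ga K) = tA. Proof. exact: pigen. Qed.
Lemma pi_b : pi (gb K) = tB. Proof. exact: pigen. Qed.
Lemma pi_c : pi (gc K) = tC. Proof. exact: pigen. Qed.
Lemma pi_d : pi (gd K) = tD. Proof. exact: pigen. Qed.

Lemma piXYmZ (x y z : F) : pi (x * y - z) = pi x * pi y - pi z.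
Proof. by rewrite piB piM. Qed.
Lemma piXYm1 (x y : F) : pi (x + y - 1) = pi x + pi y - 1.
Proof. by rewrite piB piD pi1. Qed.
Lemma piR13 (a b c d : F) :
  pi (a * b - (a + c) * d) = pi a * pi b - (pi a + pi c) * pi d.
Proof. rewrite piB; congr (_ - _); first exact: piM. by rewrite piM piD. Qed.
Lemma piR14 (a b c d : F) s :
  pi (b * a - s *: (d * c)) = pi b * pi a - sc p s * (pi d * pi c).
Proof. rewrite piB; congr (_ - _); first exact: piM. by rewrite piZ piM. Qed.

Lemma piXYmZv (x y z : F) X Y Z : pi x = X -> pi y = Y -> pi z = Z ->
  pi (x * y - z) = X * Y - Z.
Proof. by move=> <- <- <-; exact: piXYmZ. Qed.
Lemma piXYv (x y : F) X Y : pi x = X -> pi y = Y -> pi (x * y) = X * Y.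
Proof. by move=> <- <-; exact: piM. Qed.
Lemma piXYm1v (x y : F) X Y : pi x = X -> pi y = Y -> pi (x + y - 1) = X + Y - 1.
Proof. by move=> <- <-; exact: piXYm1. Qed.
Lemma piR13v (a b c d : F) A B C D : pi a = A -> pi b = B -> pi c = C -> pi d = D ->
  pi (a * b - (a + c) * d) = A * B - (A + C) * D.
Proof. by move=> <- <- <- <-; exact: piR13. Qed.
Lemma piR14v (a b c d : F) A B C D s : pi a = A -> pi b = B -> pi c = C -> pi d = D ->
  pi (b * a - s *: (d * c)) = B * A - sc p s * (D * C).
Proof. by move=> <- <- <- <-; exact: piR14. Qed.
Ltac tcomp := rewrite /tE1 /tE2 /tA /tB /tC /tD ?oneMk ?zeroMk ?scMk;
  do 4 rewrite ?mulMk ?addMk ?oppMk; rewrite /=; congr MkT; ring.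

Lemma pirel k : (k < 15)%N -> pi (D_rels p)`_k = 0.
Proof.
case: k => [|[|[|[|[|[|[|[|[|[|[|[|[|[|[|//]]]]]]]]]]]]]]] _.
- have -> : (D_rels p)`_0 = ge1 K * ge1 K - ge1 K by [].
  by rewrite (piXYmZv pi_e1 pi_e1 pi_e1); tcomp.
- have -> : (D_rels p)`_1 = ge2 K * ge2 K - ge2 K by [].
  by rewrite (piXYmZv pi_e2 pi_e2 pi_e2); tcomp.
- have -> : (D_rels p)`_2 = ge1 K * ge2 K by [].
  by rewrite (piXYv pi_e1 pi_e2); tcomp.
- have -> : (D_rels p)`_3 = ge2 K * ge1 K by [].
  by rewrite (piXYv pi_e2 pi_e1); tcomp.
- have -> : (D_rels p)`_4 = ge1 K + ge2 K - 1 by [].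
  by rewrite (piXYm1v pi_e1 pi_e2); tcomp.
- have -> : (D_rels p)`_5 = ge1 K * ga K - ga K by [].
  by rewrite (piXYmZv pi_e1 pi_a pi_a); tcomp.
- have -> : (D_rels p)`_6 = ga K * ge2 K - ga K by [].
  by rewrite (piXYmZv pi_a pi_e2 pi_a); tcomp.
- have -> : (D_rels p)`_7 = ge1 K * gc K - gc K by [].
  by rewrite (piXYmZv pi_e1 pi_c pi_c); tcomp.
- have -> : (D_rels p)`_8 = gc K * ge2 K - gc K by [].
  by rewrite (piXYmZv pi_c pi_e2 pi_c); tcomp.
- have -> : (D_rels p)`_9 = ge2 K * gb K - gb K by [].
  by rewrite (piXYmZv pi_e2 pi_b pi_b); tcomp.
- have -> : (D_rels p)`_10 = gb K * ge1 K - gb K by [].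
  by rewrite (piXYmZv pi_b pi_e1 pi_b); tcomp.
- have -> : (D_rels p)`_11 = ge2 K * gd K - gd K by [].
  by rewrite (piXYmZv pi_e2 pi_d pi_d); tcomp.
- have -> : (D_rels p)`_12 = gd K * ge1 K - gd K by [].
  by rewrite (piXYmZv pi_d pi_e1 pi_d); tcomp.
- have -> : (D_rels p)`_13 = ga K * gb K - (ga K + gc K) * gd K by [].
  by rewrite (piR13v pi_a pi_b pi_c pi_d); tcomp.
- have -> : (D_rels p)`_14 = gb K * ga K - p *: (gd K * gc K) by [].
  by rewrite (piR14v _ pi_a pi_b pi_c pi_d); tcomp.
Qed.

Lemma piJ y : D_ideal p y -> pi y = 0.
Proof.
rewrite /D_ideal => -[n [u [v [j ->]]]].
rewrite (big_morph pi (@piD K p) (@pi0 K p)) big1 // => i _.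
by rewrite !piM pirel ?mulr0 ?mul0r // (ltn_ord (j i)).
Qed.
End PiRel.

Section FinalAlg.
Variable K : fieldType.
Implicit Types (p q : K).

Lemma solve_for (x v e c : K) : e = 0 -> e = c * (x - v) -> c != 0 -> x = v.
Proof.
move=> -> /esym /eqP; rewrite mulf_eq0 => /orP [/eqP -> | ]; first by rewrite eqxx.
by rewrite subr_eq0 => /eqP.
Qed.
Lemma zero_by (X L : K) : L = 0 -> X = L -> X = 0.
Proof. by move=> -> ->. Qed.
Lemma idem01 (x e : K) : e = 0 -> e = x * x - x -> x = 0 \/ x = 1.
Proof.
move=> -> E; have : x * (x - 1) == 0 by rewrite mulrBr mulr1 -E.
rewrite mulf_eq0 subr_eq0.
by case/orP => /eqP ->; [left | right].
Qed.
Lemma det_nz (x1 y1 x2 y2 : K) :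
  (forall u v, u * x1 + v * y1 = 0 -> u * x2 + v * y2 = 0 -> u = 0 /\ v = 0) ->
  x1 * y2 - y1 * x2 != 0.
Proof.
move=> H; apply/negP => /eqP hd.
have [h1 h2] : y1 = 0 /\ - x1 = 0.
  apply: H; first ring.
  by transitivity (- (x1 * y2 - y1 * x2)); [ring | rewrite hd oppr0].
have [h3 h4] : y2 = 0 /\ - x2 = 0.
  apply: H; last ring.
  by transitivity (x1 * y2 - y1 * x2); [ring | rewrite hd].
have x10 : x1 = 0 by rewrite -[x1]opprK h2 oppr0.
have x20 : x2 = 0 by rewrite -[x2]opprK h4 oppr0.
have [h5 _] : (1 : K) = 0 /\ (0 : K) = 0.
  by apply: H; rewrite ?x10 ?x20 ?h1 ?h3; ring.
by move: (oner_neq0 K); rewrite h5 eqxx.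
Qed.

Lemma final_alg p q (l m D : K) : p != 0 -> q != 0 -> D != 0 ->
  (l ^+ 2 = D /\ p * m ^+ 2 = q * D \/ p * l ^+ 2 = D /\ m ^+ 2 = q * D) ->
  (p + 1) * l * m = (q + 1) * D -> p = q \/ p = q^-1.
Proof.
move=> hp hq hD hc htr.
have key : D ^+ 2 * ((p - q) * (p * q - 1)) = 0.
  have E : (p + 1) ^+ 2 * (p * l ^+ 2 * m ^+ 2) - p * ((p + 1) * l * m) ^+ 2 = 0 by ring.
  case: hc => [[h1 h2] | [h1 h2]].
  - have E2 : (p + 1) ^+ 2 * (p * l ^+ 2 * m ^+ 2) = (p + 1) ^+ 2 * (l ^+ 2 * (p * m ^+ 2)) by ring.
    rewrite E2 h1 h2 htr in E; rewrite -E; ring.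
  - rewrite h1 h2 htr in E; rewrite -E; ring.
have hD2 : D ^+ 2 != 0 by rewrite expf_neq0.
move/eqP: key; rewrite mulf_eq0 (negbTE hD2) /= mulf_eq0 !subr_eq0.
case/orP => /eqP h; [left => // | right].
by rewrite -[p](mulfK hq) h mul1r.
Qed.

Lemma final_case1 p q (aa ac ca cc bb bd db dd : K) :
  p != 0 -> q != 0 ->
  aa * cc - ac * ca != 0 -> bb * dd - bd * db != 0 ->
  (aa * bb - (aa + ca) * db) + (aa * bd - (aa + ca) * dd) = 0 ->
  ac * bb - (ac + cc) * db = 0 ->
  (ac * bd - (ac + cc) * dd) - (aa * bd - (aa + ca) * dd) = 0 ->
  bb * ac - q * db * cc = 0 ->
  bd * aa - q * dd * ca = 0 ->
  p * (bb * aa - q * db * ca) + (bd * ac - q * dd * cc) = 0 ->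
  p = q \/ p = q^-1.
Proof.
move=> hp hq hP hQ e13ab e13cb e13cd e14bc e14da e14dc.
set l := aa * bb - (aa + ca) * db.
set m := bb * aa - q * db * ca.
set D := (aa * cc - ac * ca) * (bb * dd - bd * db).
set X13ab := (aa * bb - (aa + ca) * db) + (aa * bd - (aa + ca) * dd) in e13ab.
set X13cb := ac * bb - (ac + cc) * db in e13cb.
set X13cd := (ac * bd - (ac + cc) * dd) - (aa * bd - (aa + ca) * dd) in e13cd.
set X14bc := bb * ac - q * db * cc in e14bc.
set X14da := bd * aa - q * dd * ca in e14da.
set X14dc := p * (bb * aa - q * db * ca) + (bd * ac - q * dd * cc) in e14dc.
apply: (@final_alg p q l m D hp hq); first by rewrite mulf_neq0.
- left; split.
  + apply/eqP; rewrite -subr_eq0; apply/eqP.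
    transitivity (l * X13ab + l * X13cd - (X13ab - l) * X13cb).
      by rewrite /l /D /X13ab /X13cd /X13cb; ring.
    by rewrite e13ab e13cd e13cb; ring.
  + apply/eqP; rewrite -subr_eq0; apply/eqP.
    transitivity (m * X14dc - X14bc * X14da).
      by rewrite /m /D /X14dc /X14bc /X14da; ring.
    by rewrite e14dc e14bc e14da; ring.
- apply/eqP; rewrite -subr_eq0; apply/eqP.
  transitivity (l * X14dc - (X13ab - l) * X14bc - X13cb * X14da + (X13cd + X13ab) * m).
    by rewrite /l /m /D /X14dc /X14bc /X14da /X13ab /X13cb /X13cd; ring.
  by rewrite e14dc e14bc e14da e13ab e13cb e13cd; ring.
Qed.

Lemma final_case2 p q (ab ad cb cd ba bc da dc : K) :
  p != 0 -> q != 0 ->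
  ab * cd - ad * cb != 0 -> ba * dc - bc * da != 0 ->
  ab * bc - (ab + cb) * dc = 0 ->
  ad * ba - (ad + cd) * da = 0 ->
  p * (ab * ba - (ab + cb) * da) + (ad * bc - (ad + cd) * dc) = 0 ->
  (ba * ab - q * da * cb) + (ba * ad - q * da * cd) = 0 ->
  bc * ab - q * dc * cb = 0 ->
  (bc * ad - q * dc * cd) - (ba * ad - q * da * cd) = 0 ->
  p = q \/ p = q^-1.
Proof.
move=> hp hq hP hQ e13bc e13da e13dc e14ab e14cb e14cd.
set l := ab * ba - (ab + cb) * da.
set m := ba * ab - q * da * cb.
set D := (ab * cd - ad * cb) * (ba * dc - bc * da).
set X13bc := ab * bc - (ab + cb) * dc in e13bc.
set X13da := ad * ba - (ad + cd) * da in e13da.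
set X13dc := p * (ab * ba - (ab + cb) * da) + (ad * bc - (ad + cd) * dc) in e13dc.
set X14ab := (ba * ab - q * da * cb) + (ba * ad - q * da * cd) in e14ab.
set X14cb := bc * ab - q * dc * cb in e14cb.
set X14cd := (bc * ad - q * dc * cd) - (ba * ad - q * da * cd) in e14cd.
apply: (@final_alg p q l m D hp hq); first by rewrite mulf_neq0.
- right; split.
  + apply/eqP; rewrite -subr_eq0; apply/eqP.
    transitivity (l * X13dc - X13bc * X13da).
      by rewrite /l /D /X13dc /X13bc /X13da; ring.
    by rewrite e13dc e13bc e13da; ring.
  + apply/eqP; rewrite -subr_eq0; apply/eqP.
    transitivity (m * (X14cd + X14ab) - (X14ab - m) * X14cb).
      by rewrite /m /D /X14cd /X14ab /X14cb; ring.
    by rewrite e14cd e14ab e14cb; ring.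
- apply/eqP; rewrite -subr_eq0; apply/eqP.
  transitivity (l * (X14cd + X14ab) - X13bc * (X14ab - m) - X13da * X14cb + X13dc * m).
    by rewrite /l /m /D /X14cd /X14ab /X14cb /X13bc /X13da /X13dc; ring.
  by rewrite e14cd e14ab e14cb e13bc e13da e13dc; ring.
Qed.
End FinalAlg.

Ltac phiclose h1 h2 := first [ring | (etransitivity; [|exact h1]; ring) | (etransitivity; [|exact h2]; ring)].
Lemma key (K : fieldType) (p q : K) (E1 E2 A B C D : T p) :
  p != 0 -> q != 0 ->
  E1 * E1 - E1 = 0 -> E2 * E2 - E2 = 0 -> E1 * E2 = 0 -> E2 * E1 = 0 -> E1 + E2 - 1 = 0 ->
  E1 * A - A = 0 -> A * E2 - A = 0 -> E1 * C - C = 0 -> C * E2 - C = 0 ->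
  E2 * B - B = 0 -> B * E1 - B = 0 -> E2 * D - D = 0 -> D * E1 - D = 0 ->
  A * B - (A + C) * D = 0 -> B * A - sc p q * (D * C) = 0 ->
  (forall s na nc u v, phiac s na nc u v E1 = 0 -> phiac s na nc u v E2 = 0 ->
     phiac s na nc u v A = 0 -> phiac s na nc u v B = 0 ->
     phiac s na nc u v C = 0 -> phiac s na nc u v D = 0 -> u = 0 /\ v = 0) ->
  (forall s na nc u v, phibd s na nc u v E1 = 0 -> phibd s na nc u v E2 = 0 ->
     phibd s na nc u v A = 0 -> phibd s na nc u v B = 0 ->
     phibd s na nc u v C = 0 -> phibd s na nc u v D = 0 -> u = 0 /\ v = 0) ->
  p = q \/ p = q^-1.
Proof.
move: E1 E2 A B C D => [e1 e2 ea ec eb ed eab ecb ecd ebc eda edc] [f1 f2 fa fc fb fd fab fcb fcd fbc fda fdc] [a1 a2 aa ac ab ad aab acb acd abc ada adc] [b1 b2 ba bc bb bd bab bcb bcd bbc bda bdc] [c1 c2 ca cc cb cd cab ccb ccd cbc cda cdc] [d1 d2 da dc db dd dab dcb dcd dbc dda ddc].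
move=> hp hq H0 H1 H2 H3 H4 H5 H6 H7 H8 H9 H10 H11 H12 H13 H14 SPac SPbd.
move: H0; rewrite ?oneMk ?zeroMk ?scMk; do 4 rewrite ?mulMk ?addMk ?oppMk; rewrite /= => -[R0_1 R0_2 R0_a R0_c R0_b R0_d R0_ab R0_cb R0_cd R0_bc R0_da R0_dc].
move: H1; rewrite ?oneMk ?zeroMk ?scMk; do 4 rewrite ?mulMk ?addMk ?oppMk; rewrite /= => -[R1_1 R1_2 R1_a R1_c R1_b R1_d R1_ab R1_cb R1_cd R1_bc R1_da R1_dc].
move: H2; rewrite ?oneMk ?zeroMk ?scMk; do 4 rewrite ?mulMk ?addMk ?oppMk; rewrite /= => -[R2_1 R2_2 R2_a R2_c R2_b R2_d R2_ab R2_cb R2_cd R2_bc R2_da R2_dc].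
move: H3; rewrite ?oneMk ?zeroMk ?scMk; do 4 rewrite ?mulMk ?addMk ?oppMk; rewrite /= => -[R3_1 R3_2 R3_a R3_c R3_b R3_d R3_ab R3_cb R3_cd R3_bc R3_da R3_dc].
move: H4; rewrite ?oneMk ?zeroMk ?scMk; do 4 rewrite ?mulMk ?addMk ?oppMk; rewrite /= => -[R4_1 R4_2 R4_a R4_c R4_b R4_d R4_ab R4_cb R4_cd R4_bc R4_da R4_dc].
move: H5; rewrite ?oneMk ?zeroMk ?scMk; do 4 rewrite ?mulMk ?addMk ?oppMk; rewrite /= => -[R5_1 R5_2 R5_a R5_c R5_b R5_d R5_ab R5_cb R5_cd R5_bc R5_da R5_dc].
move: H6; rewrite ?oneMk ?zeroMk ?scMk; do 4 rewrite ?mulMk ?addMk ?oppMk; rewrite /= => -[R6_1 R6_2 R6_a R6_c R6_b R6_d R6_ab R6_cb R6_cd R6_bc R6_da R6_dc].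
move: H7; rewrite ?oneMk ?zeroMk ?scMk; do 4 rewrite ?mulMk ?addMk ?oppMk; rewrite /= => -[R7_1 R7_2 R7_a R7_c R7_b R7_d R7_ab R7_cb R7_cd R7_bc R7_da R7_dc].
move: H8; rewrite ?oneMk ?zeroMk ?scMk; do 4 rewrite ?mulMk ?addMk ?oppMk; rewrite /= => -[R8_1 R8_2 R8_a R8_c R8_b R8_d R8_ab R8_cb R8_cd R8_bc R8_da R8_dc].
move: H9; rewrite ?oneMk ?zeroMk ?scMk; do 4 rewrite ?mulMk ?addMk ?oppMk; rewrite /= => -[R9_1 R9_2 R9_a R9_c R9_b R9_d R9_ab R9_cb R9_cd R9_bc R9_da R9_dc].
move: H10; rewrite ?oneMk ?zeroMk ?scMk; do 4 rewrite ?mulMk ?addMk ?oppMk; rewrite /= => -[R10_1 R10_2 R10_a R10_c R10_b R10_d R10_ab R10_cb R10_cd R10_bc R10_da R10_dc].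
move: H11; rewrite ?oneMk ?zeroMk ?scMk; do 4 rewrite ?mulMk ?addMk ?oppMk; rewrite /= => -[R11_1 R11_2 R11_a R11_c R11_b R11_d R11_ab R11_cb R11_cd R11_bc R11_da R11_dc].
move: H12; rewrite ?oneMk ?zeroMk ?scMk; do 4 rewrite ?mulMk ?addMk ?oppMk; rewrite /= => -[R12_1 R12_2 R12_a R12_c R12_b R12_d R12_ab R12_cb R12_cd R12_bc R12_da R12_dc].
move: H13; rewrite ?oneMk ?zeroMk ?scMk; do 4 rewrite ?mulMk ?addMk ?oppMk; rewrite /= => -[R13_1 R13_2 R13_a R13_c R13_b R13_d R13_ab R13_cb R13_cd R13_bc R13_da R13_dc].
move: H14; rewrite ?oneMk ?zeroMk ?scMk; do 4 rewrite ?mulMk ?addMk ?oppMk; rewrite /= => -[R14_1 R14_2 R14_a R14_c R14_b R14_d R14_ab R14_cb R14_cd R14_bc R14_da R14_dc].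
have [He1|He1] := idem01 (x:=e1) R0_1 ltac:(ring); subst e1.
- have [He2|He2] := idem01 (x:=e2) R0_2 ltac:(ring); subst e2.
  + have S : ea = 0 := solve_for (x:=ea) (v:=0) (c:= -1) R0_a ltac:(ring) ltac:(by rewrite ?oppr_eq0 oner_eq0). subst ea.
    have S : ec = 0 := solve_for (x:=ec) (v:=0) (c:= -1) R0_c ltac:(ring) ltac:(by rewrite ?oppr_eq0 oner_eq0). subst ec.
    have S : eb = 0 := solve_for (x:=eb) (v:=0) (c:= -1) R0_b ltac:(ring) ltac:(by rewrite ?oppr_eq0 oner_eq0). subst eb.
    have S : ed = 0 := solve_for (x:=ed) (v:=0) (c:= -1) R0_d ltac:(ring) ltac:(by rewrite ?oppr_eq0 oner_eq0). subst ed.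
    have S : f1 = ((1)) := solve_for (x:=f1) (v:=((1))) (c:= 1) R4_1 ltac:(ring) ltac:(by rewrite ?oppr_eq0 oner_eq0). subst f1.
    have S : f2 = ((1)) := solve_for (x:=f2) (v:=((1))) (c:= 1) R4_2 ltac:(ring) ltac:(by rewrite ?oppr_eq0 oner_eq0). subst f2.
    have S : fa = 0 := solve_for (x:=fa) (v:=0) (c:= 1) R1_a ltac:(ring) ltac:(by rewrite ?oppr_eq0 oner_eq0). subst fa.
    have S : fc = 0 := solve_for (x:=fc) (v:=0) (c:= 1) R1_c ltac:(ring) ltac:(by rewrite ?oppr_eq0 oner_eq0). subst fc.
    have S : fb = 0 := solve_for (x:=fb) (v:=0) (c:= 1) R1_b ltac:(ring) ltac:(by rewrite ?oppr_eq0 oner_eq0). subst fb.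
    have S : fd = 0 := solve_for (x:=fd) (v:=0) (c:= 1) R1_d ltac:(ring) ltac:(by rewrite ?oppr_eq0 oner_eq0). subst fd.
    have S : a1 = 0 := solve_for (x:=a1) (v:=0) (c:= -1) R5_1 ltac:(ring) ltac:(by rewrite ?oppr_eq0 oner_eq0). subst a1.
    have S : a2 = 0 := solve_for (x:=a2) (v:=0) (c:= -1) R5_2 ltac:(ring) ltac:(by rewrite ?oppr_eq0 oner_eq0). subst a2.
    have S : aa = 0 := solve_for (x:=aa) (v:=0) (c:= -1) R5_a ltac:(ring) ltac:(by rewrite ?oppr_eq0 oner_eq0). subst aa.
    have S : ac = 0 := solve_for (x:=ac) (v:=0) (c:= -1) R5_c ltac:(ring) ltac:(by rewrite ?oppr_eq0 oner_eq0). subst ac.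
    have S : ab = 0 := solve_for (x:=ab) (v:=0) (c:= -1) R5_b ltac:(ring) ltac:(by rewrite ?oppr_eq0 oner_eq0). subst ab.
    have S : ad = 0 := solve_for (x:=ad) (v:=0) (c:= -1) R5_d ltac:(ring) ltac:(by rewrite ?oppr_eq0 oner_eq0). subst ad.
    have S : c1 = 0 := solve_for (x:=c1) (v:=0) (c:= -1) R7_1 ltac:(ring) ltac:(by rewrite ?oppr_eq0 oner_eq0). subst c1.
    have S : c2 = 0 := solve_for (x:=c2) (v:=0) (c:= -1) R7_2 ltac:(ring) ltac:(by rewrite ?oppr_eq0 oner_eq0). subst c2.
    have S : ca = 0 := solve_for (x:=ca) (v:=0) (c:= -1) R7_a ltac:(ring) ltac:(by rewrite ?oppr_eq0 oner_eq0). subst ca.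
    have S : cc = 0 := solve_for (x:=cc) (v:=0) (c:= -1) R7_c ltac:(ring) ltac:(by rewrite ?oppr_eq0 oner_eq0). subst cc.
    have S : cb = 0 := solve_for (x:=cb) (v:=0) (c:= -1) R7_b ltac:(ring) ltac:(by rewrite ?oppr_eq0 oner_eq0). subst cb.
    have S : cd = 0 := solve_for (x:=cd) (v:=0) (c:= -1) R7_d ltac:(ring) ltac:(by rewrite ?oppr_eq0 oner_eq0). subst cd.
    have S : b1 = 0 := solve_for (x:=b1) (v:=0) (c:= -1) R10_1 ltac:(ring) ltac:(by rewrite ?oppr_eq0 oner_eq0). subst b1.
    have S : b2 = 0 := solve_for (x:=b2) (v:=0) (c:= -1) R10_2 ltac:(ring) ltac:(by rewrite ?oppr_eq0 oner_eq0). subst b2.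
    have S : ba = 0 := solve_for (x:=ba) (v:=0) (c:= -1) R10_a ltac:(ring) ltac:(by rewrite ?oppr_eq0 oner_eq0). subst ba.
    have S : bc = 0 := solve_for (x:=bc) (v:=0) (c:= -1) R10_c ltac:(ring) ltac:(by rewrite ?oppr_eq0 oner_eq0). subst bc.
    have S : bb = 0 := solve_for (x:=bb) (v:=0) (c:= -1) R10_b ltac:(ring) ltac:(by rewrite ?oppr_eq0 oner_eq0). subst bb.
    have S : bd = 0 := solve_for (x:=bd) (v:=0) (c:= -1) R10_d ltac:(ring) ltac:(by rewrite ?oppr_eq0 oner_eq0). subst bd.
    have S : d1 = 0 := solve_for (x:=d1) (v:=0) (c:= -1) R12_1 ltac:(ring) ltac:(by rewrite ?oppr_eq0 oner_eq0). subst d1.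
    have S : d2 = 0 := solve_for (x:=d2) (v:=0) (c:= -1) R12_2 ltac:(ring) ltac:(by rewrite ?oppr_eq0 oner_eq0). subst d2.
    have S : da = 0 := solve_for (x:=da) (v:=0) (c:= -1) R12_a ltac:(ring) ltac:(by rewrite ?oppr_eq0 oner_eq0). subst da.
    have S : dc = 0 := solve_for (x:=dc) (v:=0) (c:= -1) R12_c ltac:(ring) ltac:(by rewrite ?oppr_eq0 oner_eq0). subst dc.
    have S : db = 0 := solve_for (x:=db) (v:=0) (c:= -1) R12_b ltac:(ring) ltac:(by rewrite ?oppr_eq0 oner_eq0). subst db.
    have S : dd = 0 := solve_for (x:=dd) (v:=0) (c:= -1) R12_d ltac:(ring) ltac:(by rewrite ?oppr_eq0 oner_eq0). subst dd.
    have [h1 _] : (1 : K) = 0 /\ (0 : K) = 0 by apply: (SPac 0 0 0 1 0); rewrite /phiac /=; ring.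
    by move: (oner_neq0 K); rewrite h1 eqxx.
  + have S : f2 = 0 := solve_for (x:=f2) (v:=0) (c:= 1) R2_2 ltac:(ring) ltac:(by rewrite ?oppr_eq0 oner_eq0). subst f2.
    have S : fb = (- (eb*f1)) := solve_for (x:=fb) (v:=(- (eb*f1))) (c:= 1) R2_b ltac:(ring) ltac:(by rewrite ?oppr_eq0 oner_eq0). subst fb.
    have S : fd = (- (ed*f1)) := solve_for (x:=fd) (v:=(- (ed*f1))) (c:= 1) R2_d ltac:(ring) ltac:(by rewrite ?oppr_eq0 oner_eq0). subst fd.
    have S : fa = (- (ea*f1)) := solve_for (x:=fa) (v:=(- (ea*f1))) (c:= 1) R3_a ltac:(ring) ltac:(by rewrite ?oppr_eq0 oner_eq0). subst fa.
    have S : fc = (- (ec*f1)) := solve_for (x:=fc) (v:=(- (ec*f1))) (c:= 1) R3_c ltac:(ring) ltac:(by rewrite ?oppr_eq0 oner_eq0). subst fc.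
    have S : f1 = ((1)) := solve_for (x:=f1) (v:=((1))) (c:= 1) R4_1 ltac:(ring) ltac:(by rewrite ?oppr_eq0 oner_eq0). subst f1.
    have S : a1 = 0 := solve_for (x:=a1) (v:=0) (c:= -1) R5_1 ltac:(ring) ltac:(by rewrite ?oppr_eq0 oner_eq0). subst a1.
    have S : a2 = 0 := solve_for (x:=a2) (v:=0) (c:= -1) R6_2 ltac:(ring) ltac:(by rewrite ?oppr_eq0 oner_eq0). subst a2.
    have S : aa = 0 := solve_for (x:=aa) (v:=0) (c:= -1) R5_a ltac:(ring) ltac:(by rewrite ?oppr_eq0 oner_eq0). subst aa.
    have S : ac = 0 := solve_for (x:=ac) (v:=0) (c:= -1) R5_c ltac:(ring) ltac:(by rewrite ?oppr_eq0 oner_eq0). subst ac.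
    have S : c1 = 0 := solve_for (x:=c1) (v:=0) (c:= -1) R7_1 ltac:(ring) ltac:(by rewrite ?oppr_eq0 oner_eq0). subst c1.
    have S : c2 = 0 := solve_for (x:=c2) (v:=0) (c:= -1) R8_2 ltac:(ring) ltac:(by rewrite ?oppr_eq0 oner_eq0). subst c2.
    have S : ca = 0 := solve_for (x:=ca) (v:=0) (c:= -1) R7_a ltac:(ring) ltac:(by rewrite ?oppr_eq0 oner_eq0). subst ca.
    have S : cc = 0 := solve_for (x:=cc) (v:=0) (c:= -1) R7_c ltac:(ring) ltac:(by rewrite ?oppr_eq0 oner_eq0). subst cc.
    have S : b2 = 0 := solve_for (x:=b2) (v:=0) (c:= -1) R9_2 ltac:(ring) ltac:(by rewrite ?oppr_eq0 oner_eq0). subst b2.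
    have S : b1 = 0 := solve_for (x:=b1) (v:=0) (c:= -1) R10_1 ltac:(ring) ltac:(by rewrite ?oppr_eq0 oner_eq0). subst b1.
    have S : bb = 0 := solve_for (x:=bb) (v:=0) (c:= -1) R9_b ltac:(ring) ltac:(by rewrite ?oppr_eq0 oner_eq0). subst bb.
    have S : bd = 0 := solve_for (x:=bd) (v:=0) (c:= -1) R9_d ltac:(ring) ltac:(by rewrite ?oppr_eq0 oner_eq0). subst bd.
    have S : d2 = 0 := solve_for (x:=d2) (v:=0) (c:= -1) R11_2 ltac:(ring) ltac:(by rewrite ?oppr_eq0 oner_eq0). subst d2.
    have S : d1 = 0 := solve_for (x:=d1) (v:=0) (c:= -1) R12_1 ltac:(ring) ltac:(by rewrite ?oppr_eq0 oner_eq0). subst d1.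
    have S : db = 0 := solve_for (x:=db) (v:=0) (c:= -1) R11_b ltac:(ring) ltac:(by rewrite ?oppr_eq0 oner_eq0). subst db.
    have S : dd = 0 := solve_for (x:=dd) (v:=0) (c:= -1) R11_d ltac:(ring) ltac:(by rewrite ?oppr_eq0 oner_eq0). subst dd.
    have hP : ab * cd - ad * cb != 0.
      apply: det_nz => u v h1 h2; apply: (SPbd (-1) eb ed u v); rewrite /phibd /=; phiclose h1 h2.
    have hQ : ba * dc - bc * da != 0.
      apply: det_nz => u v h1 h2; apply: (SPac (-1) ea ec u v); rewrite /phiac /=; phiclose h1 h2.
    apply: (final_case2 hp hq hP hQ).
    - by apply: (zero_by R13_bc); ring.
    - by apply: (zero_by R13_da); ring.
    - by apply: (zero_by R13_dc); ring.
    - by apply: (zero_by R14_ab); ring.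
    - by apply: (zero_by R14_cb); ring.
    - by apply: (zero_by R14_cd); ring.
- have [He2|He2] := idem01 (x:=e2) R0_2 ltac:(ring); subst e2.
  + have S : f1 = 0 := solve_for (x:=f1) (v:=0) (c:= 1) R2_1 ltac:(ring) ltac:(by rewrite ?oppr_eq0 oner_eq0). subst f1.
    have S : fa = (- (ea*f2)) := solve_for (x:=fa) (v:=(- (ea*f2))) (c:= 1) R2_a ltac:(ring) ltac:(by rewrite ?oppr_eq0 oner_eq0). subst fa.
    have S : fc = (- (ec*f2)) := solve_for (x:=fc) (v:=(- (ec*f2))) (c:= 1) R2_c ltac:(ring) ltac:(by rewrite ?oppr_eq0 oner_eq0). subst fc.
    have S : fb = (- (eb*f2)) := solve_for (x:=fb) (v:=(- (eb*f2))) (c:= 1) R3_b ltac:(ring) ltac:(by rewrite ?oppr_eq0 oner_eq0). subst fb.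
    have S : fd = (- (ed*f2)) := solve_for (x:=fd) (v:=(- (ed*f2))) (c:= 1) R3_d ltac:(ring) ltac:(by rewrite ?oppr_eq0 oner_eq0). subst fd.
    have S : f2 = ((1)) := solve_for (x:=f2) (v:=((1))) (c:= 1) R4_2 ltac:(ring) ltac:(by rewrite ?oppr_eq0 oner_eq0). subst f2.
    have S : a2 = 0 := solve_for (x:=a2) (v:=0) (c:= -1) R5_2 ltac:(ring) ltac:(by rewrite ?oppr_eq0 oner_eq0). subst a2.
    have S : a1 = 0 := solve_for (x:=a1) (v:=0) (c:= -1) R6_1 ltac:(ring) ltac:(by rewrite ?oppr_eq0 oner_eq0). subst a1.
    have S : ab = 0 := solve_for (x:=ab) (v:=0) (c:= -1) R5_b ltac:(ring) ltac:(by rewrite ?oppr_eq0 oner_eq0). subst ab.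
    have S : ad = 0 := solve_for (x:=ad) (v:=0) (c:= -1) R5_d ltac:(ring) ltac:(by rewrite ?oppr_eq0 oner_eq0). subst ad.
    have S : c2 = 0 := solve_for (x:=c2) (v:=0) (c:= -1) R7_2 ltac:(ring) ltac:(by rewrite ?oppr_eq0 oner_eq0). subst c2.
    have S : c1 = 0 := solve_for (x:=c1) (v:=0) (c:= -1) R8_1 ltac:(ring) ltac:(by rewrite ?oppr_eq0 oner_eq0). subst c1.
    have S : cb = 0 := solve_for (x:=cb) (v:=0) (c:= -1) R7_b ltac:(ring) ltac:(by rewrite ?oppr_eq0 oner_eq0). subst cb.
    have S : cd = 0 := solve_for (x:=cd) (v:=0) (c:= -1) R7_d ltac:(ring) ltac:(by rewrite ?oppr_eq0 oner_eq0). subst cd.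
    have S : b1 = 0 := solve_for (x:=b1) (v:=0) (c:= -1) R9_1 ltac:(ring) ltac:(by rewrite ?oppr_eq0 oner_eq0). subst b1.
    have S : b2 = 0 := solve_for (x:=b2) (v:=0) (c:= -1) R10_2 ltac:(ring) ltac:(by rewrite ?oppr_eq0 oner_eq0). subst b2.
    have S : ba = 0 := solve_for (x:=ba) (v:=0) (c:= -1) R9_a ltac:(ring) ltac:(by rewrite ?oppr_eq0 oner_eq0). subst ba.
    have S : bc = 0 := solve_for (x:=bc) (v:=0) (c:= -1) R9_c ltac:(ring) ltac:(by rewrite ?oppr_eq0 oner_eq0). subst bc.
    have S : d1 = 0 := solve_for (x:=d1) (v:=0) (c:= -1) R11_1 ltac:(ring) ltac:(by rewrite ?oppr_eq0 oner_eq0). subst d1.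
    have S : d2 = 0 := solve_for (x:=d2) (v:=0) (c:= -1) R12_2 ltac:(ring) ltac:(by rewrite ?oppr_eq0 oner_eq0). subst d2.
    have S : da = 0 := solve_for (x:=da) (v:=0) (c:= -1) R11_a ltac:(ring) ltac:(by rewrite ?oppr_eq0 oner_eq0). subst da.
    have S : dc = 0 := solve_for (x:=dc) (v:=0) (c:= -1) R11_c ltac:(ring) ltac:(by rewrite ?oppr_eq0 oner_eq0). subst dc.
    have hP : aa * cc - ac * ca != 0.
      apply: det_nz => u v h1 h2; apply: (SPac 1 ea ec u v); rewrite /phiac /=; phiclose h1 h2.
    have hQ : bb * dd - bd * db != 0.
      apply: det_nz => u v h1 h2; apply: (SPbd 1 eb ed u v); rewrite /phibd /=; phiclose h1 h2.
    apply: (final_case1 hp hq hP hQ).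
    - by apply: (zero_by R13_ab); ring.
    - by apply: (zero_by R13_cb); ring.
    - by apply: (zero_by R13_cd); ring.
    - by apply: (zero_by R14_bc); ring.
    - by apply: (zero_by R14_da); ring.
    - by apply: (zero_by R14_dc); ring.
  + have S : ea = 0 := solve_for (x:=ea) (v:=0) (c:= 1) R0_a ltac:(ring) ltac:(by rewrite ?oppr_eq0 oner_eq0). subst ea.
    have S : ec = 0 := solve_for (x:=ec) (v:=0) (c:= 1) R0_c ltac:(ring) ltac:(by rewrite ?oppr_eq0 oner_eq0). subst ec.
    have S : eb = 0 := solve_for (x:=eb) (v:=0) (c:= 1) R0_b ltac:(ring) ltac:(by rewrite ?oppr_eq0 oner_eq0). subst eb.
    have S : ed = 0 := solve_for (x:=ed) (v:=0) (c:= 1) R0_d ltac:(ring) ltac:(by rewrite ?oppr_eq0 oner_eq0). subst ed.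
    have S : f1 = 0 := solve_for (x:=f1) (v:=0) (c:= 1) R2_1 ltac:(ring) ltac:(by rewrite ?oppr_eq0 oner_eq0). subst f1.
    have S : f2 = 0 := solve_for (x:=f2) (v:=0) (c:= 1) R2_2 ltac:(ring) ltac:(by rewrite ?oppr_eq0 oner_eq0). subst f2.
    have S : fa = 0 := solve_for (x:=fa) (v:=0) (c:= -1) R1_a ltac:(ring) ltac:(by rewrite ?oppr_eq0 oner_eq0). subst fa.
    have S : fc = 0 := solve_for (x:=fc) (v:=0) (c:= -1) R1_c ltac:(ring) ltac:(by rewrite ?oppr_eq0 oner_eq0). subst fc.
    have S : fb = 0 := solve_for (x:=fb) (v:=0) (c:= -1) R1_b ltac:(ring) ltac:(by rewrite ?oppr_eq0 oner_eq0). subst fb.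
    have S : fd = 0 := solve_for (x:=fd) (v:=0) (c:= -1) R1_d ltac:(ring) ltac:(by rewrite ?oppr_eq0 oner_eq0). subst fd.
    have S : a1 = 0 := solve_for (x:=a1) (v:=0) (c:= -1) R6_1 ltac:(ring) ltac:(by rewrite ?oppr_eq0 oner_eq0). subst a1.
    have S : a2 = 0 := solve_for (x:=a2) (v:=0) (c:= -1) R6_2 ltac:(ring) ltac:(by rewrite ?oppr_eq0 oner_eq0). subst a2.
    have S : aa = 0 := solve_for (x:=aa) (v:=0) (c:= -1) R6_a ltac:(ring) ltac:(by rewrite ?oppr_eq0 oner_eq0). subst aa.
    have S : ac = 0 := solve_for (x:=ac) (v:=0) (c:= -1) R6_c ltac:(ring) ltac:(by rewrite ?oppr_eq0 oner_eq0). subst ac.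
    have S : ab = 0 := solve_for (x:=ab) (v:=0) (c:= -1) R6_b ltac:(ring) ltac:(by rewrite ?oppr_eq0 oner_eq0). subst ab.
    have S : ad = 0 := solve_for (x:=ad) (v:=0) (c:= -1) R6_d ltac:(ring) ltac:(by rewrite ?oppr_eq0 oner_eq0). subst ad.
    have S : c1 = 0 := solve_for (x:=c1) (v:=0) (c:= -1) R8_1 ltac:(ring) ltac:(by rewrite ?oppr_eq0 oner_eq0). subst c1.
    have S : c2 = 0 := solve_for (x:=c2) (v:=0) (c:= -1) R8_2 ltac:(ring) ltac:(by rewrite ?oppr_eq0 oner_eq0). subst c2.
    have S : ca = 0 := solve_for (x:=ca) (v:=0) (c:= -1) R8_a ltac:(ring) ltac:(by rewrite ?oppr_eq0 oner_eq0). subst ca.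
    have S : cc = 0 := solve_for (x:=cc) (v:=0) (c:= -1) R8_c ltac:(ring) ltac:(by rewrite ?oppr_eq0 oner_eq0). subst cc.
    have S : cb = 0 := solve_for (x:=cb) (v:=0) (c:= -1) R8_b ltac:(ring) ltac:(by rewrite ?oppr_eq0 oner_eq0). subst cb.
    have S : cd = 0 := solve_for (x:=cd) (v:=0) (c:= -1) R8_d ltac:(ring) ltac:(by rewrite ?oppr_eq0 oner_eq0). subst cd.
    have S : b1 = 0 := solve_for (x:=b1) (v:=0) (c:= -1) R9_1 ltac:(ring) ltac:(by rewrite ?oppr_eq0 oner_eq0). subst b1.
    have S : b2 = 0 := solve_for (x:=b2) (v:=0) (c:= -1) R9_2 ltac:(ring) ltac:(by rewrite ?oppr_eq0 oner_eq0). subst b2.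
    have S : ba = 0 := solve_for (x:=ba) (v:=0) (c:= -1) R9_a ltac:(ring) ltac:(by rewrite ?oppr_eq0 oner_eq0). subst ba.
    have S : bc = 0 := solve_for (x:=bc) (v:=0) (c:= -1) R9_c ltac:(ring) ltac:(by rewrite ?oppr_eq0 oner_eq0). subst bc.
    have S : bb = 0 := solve_for (x:=bb) (v:=0) (c:= -1) R9_b ltac:(ring) ltac:(by rewrite ?oppr_eq0 oner_eq0). subst bb.
    have S : bd = 0 := solve_for (x:=bd) (v:=0) (c:= -1) R9_d ltac:(ring) ltac:(by rewrite ?oppr_eq0 oner_eq0). subst bd.
    have S : d1 = 0 := solve_for (x:=d1) (v:=0) (c:= -1) R11_1 ltac:(ring) ltac:(by rewrite ?oppr_eq0 oner_eq0). subst d1.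
    have S : d2 = 0 := solve_for (x:=d2) (v:=0) (c:= -1) R11_2 ltac:(ring) ltac:(by rewrite ?oppr_eq0 oner_eq0). subst d2.
    have S : da = 0 := solve_for (x:=da) (v:=0) (c:= -1) R11_a ltac:(ring) ltac:(by rewrite ?oppr_eq0 oner_eq0). subst da.
    have S : dc = 0 := solve_for (x:=dc) (v:=0) (c:= -1) R11_c ltac:(ring) ltac:(by rewrite ?oppr_eq0 oner_eq0). subst dc.
    have S : db = 0 := solve_for (x:=db) (v:=0) (c:= -1) R11_b ltac:(ring) ltac:(by rewrite ?oppr_eq0 oner_eq0). subst db.
    have S : dd = 0 := solve_for (x:=dd) (v:=0) (c:= -1) R11_d ltac:(ring) ltac:(by rewrite ?oppr_eq0 oner_eq0). subst dd.
    have [h1 _] : (1 : K) = 0 /\ (0 : K) = 0 by apply: (SPac 0 0 0 1 0); rewrite /phiac /=; ring.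
    by move: (oner_neq0 K); rewrite h1 eqxx.
Qed.

Section Hard.
Variables (K : fieldType) (p q : K).
Local Notation F := (FreeAlg K).
Variable h : F -> T p.
Hypotheses (hD : forall x y, h (x + y) = h x + h y)
  (hZ : forall k x, h (k *: x) = sc p k * h x)
  (hM : forall x y, h (x * y) = h x * h y) (h1 : h 1 = 1)
  (hI : forall r, D_ideal q r -> h r = 0)
  (hS : forall y, exists x, h x = piT p y).

Lemma hB x y : h (x - y) = h x - h y.
Proof. by have := hD (x - y) y; rewrite subrK => ->; rewrite addrK. Qed.
Lemma hXYmZ x y z : h (x * y - z) = h x * h y - h z.
Proof. by rewrite hB hM. Qed.
Lemma hXYm1 x y : h (x + y - 1) = h x + h y - 1.
Proof. by rewrite hB hD h1. Qed.
Lemma hR13 a b c d : h (a * b - (a + c) * d) = h a * h b - (h a + h c) * h d.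
Proof. rewrite hB; congr (_ - _); first exact: hM. by rewrite hM hD. Qed.
Lemma hR14 a b c d s : h (b * a - s *: (d * c)) = h b * h a - sc p s * (h d * h c).
Proof. rewrite hB; congr (_ - _); first exact: hM. by rewrite hZ hM. Qed.

Lemma hrel k : (k < 15)%N -> h (D_rels q)`_k = 0.
Proof. by move=> hk; apply: hI; apply: idealG'. Qed.

Lemma gen_cases (P : F -> Prop) :
  P (ge1 K) -> P (ge2 K) -> P (ga K) -> P (gb K) -> P (gc K) -> P (gd K) ->
  forall i, P (gen K i).
Proof.
move=> H0 H1 H2 H3 H4 H5; case=> [[|[|[|[|[|[|//]]]]]] Hi].
- by rewrite (_ : Ordinal Hi = Ordinal (isT : (0 < 6)%N)) //; apply: val_inj.
- by rewrite (_ : Ordinal Hi = Ordinal (isT : (1 < 6)%N)) //; apply: val_inj.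
- by rewrite (_ : Ordinal Hi = Ordinal (isT : (2 < 6)%N)) //; apply: val_inj.
- by rewrite (_ : Ordinal Hi = Ordinal (isT : (3 < 6)%N)) //; apply: val_inj.
- by rewrite (_ : Ordinal Hi = Ordinal (isT : (4 < 6)%N)) //; apply: val_inj.
- by rewrite (_ : Ordinal Hi = Ordinal (isT : (5 < 6)%N)) //; apply: val_inj.
Qed.

Lemma hard_h : p != 0 -> q != 0 -> p = q \/ p = q^-1.
Proof.
move=> hp hq.
have h0 : h 0 = 0.
  have E := hD 0 0; rewrite addr0 in E; by apply: (addrI (h 0)); rewrite -E addr0.
apply: (key (E1 := h (ge1 K)) (E2 := h (ge2 K)) (A := h (ga K)) (B := h (gb K))
          (C := h (gc K)) (D := h (gd K)) hp hq).
- by rewrite -hXYmZ; apply: (hrel (k := 0)).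
- by rewrite -hXYmZ; apply: (hrel (k := 1)).
- by rewrite -hM; apply: (hrel (k := 2)).
- by rewrite -hM; apply: (hrel (k := 3)).
- by rewrite -hXYm1; apply: (hrel (k := 4)).
- by rewrite -hXYmZ; apply: (hrel (k := 5)).
- by rewrite -hXYmZ; apply: (hrel (k := 6)).
- by rewrite -hXYmZ; apply: (hrel (k := 7)).
- by rewrite -hXYmZ; apply: (hrel (k := 8)).
- by rewrite -hXYmZ; apply: (hrel (k := 9)).
- by rewrite -hXYmZ; apply: (hrel (k := 10)).
- by rewrite -hXYmZ; apply: (hrel (k := 11)).
- by rewrite -hXYmZ; apply: (hrel (k := 12)).
- by rewrite -hR13; apply: (hrel (k := 13)).
- by rewrite -hR14; apply: (hrel (k := 14)).
- move=> s na nc u v z1 z2 za zb zc zd.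
  have Hall : forall x, phiac s na nc u v (h x) = 0.
    exact: (@hderiv K (T p) (sc p) h (phiac s na nc u v) (@x1 K) (@x2 K) hD hZ hM h1
      (@phiacD K p s na nc u v) (@phiacZ K p s na nc u v) (@phiacM K p s na nc u v)
      (@phiac1 K p s na nc u v) (@phiac0 K p s na nc u v) (@gen_cases (fun x => _ (h x) = 0) z1 z2 za zb zc zd)).
  have [xa Hxa] := hS (ga K); have [xc Hxc] := hS (gc K).
  have := Hall xa; have := Hall xc; rewrite Hxa Hxc pi_a pi_c /phiac /tA /tC /=.
  move=> Ec Ea; split.
  + by rewrite -Ea; ring.
  + by rewrite -Ec; ring.
- move=> s na nc u v z1 z2 za zb zc zd.
  have Hall : forall x, phibd s na nc u v (h x) = 0.
    exact: (@hderiv K (T p) (sc p) h (phibd s na nc u v) (@x2 K) (@x1 K) hD hZ hM h1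
      (@phibdD K p s na nc u v) (@phibdZ K p s na nc u v) (@phibdM K p s na nc u v)
      (@phibd1 K p s na nc u v) (@phibd0 K p s na nc u v) (@gen_cases (fun x => _ (h x) = 0) z1 z2 za zb zc zd)).
  have [xb Hxb] := hS (gb K); have [xd Hxd] := hS (gd K).
  have := Hall xb; have := Hall xd; rewrite Hxb Hxd pi_b pi_d /phibd /tB /tD /=.
  move=> Ed Eb; split.
  + by rewrite -Eb; ring.
  + by rewrite -Ed; ring.
Qed.
End Hard.

Lemma hard (K : fieldType) (p q : K) : p != 0 -> q != 0 -> D_iso q p -> p = q \/ p = q^-1.
Proof.
move=> hp hq; rewrite /D_iso /quot_alg_iso => -[f [[fI fD fZ fM f1] [finj fsurj]]].
apply: (@hard_h K p q (fun x => piT p (f x))) => //.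
- move=> x y; apply/eqP; rewrite -subr_eq0 -piD -piB; apply/eqP; exact: piJ (fD x y).
- move=> k x; apply/eqP; rewrite -piZ -subr_eq0 -piB; apply/eqP; exact: piJ (fZ k x).
- move=> x y; apply/eqP; rewrite -piM -subr_eq0 -piB; apply/eqP; exact: piJ (fM x y).
- apply/eqP; rewrite -(@pi1 K p) -subr_eq0 -piB; apply/eqP; exact: piJ f1.
- move=> r Hr.
  have := fI r 0; rewrite subr0 => /(_ Hr) /piJ; rewrite piB => /eqP; rewrite subr_eq0 => /eqP ->.
  have := fD 0 0; rewrite addr0 => /piJ; rewrite piB piD => /eqP; rewrite subr_eq0 => /eqP E.
  by apply: (addrI (piT p (f 0))); rewrite -E addr0.
- move=> y; have [x Hx] := fsurj y; exists x.
  apply/eqP; rewrite -subr_eq0 -piB; apply/eqP; exact: piJ Hx.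
Qed.

Theorem proposition3p9 (K : closedFieldType) (charK : [pchar K] =i pred0)
    (p q : K) (hp : p != 0) (hq : q != 0) :
  D_iso q p <-> (p = q \/ p = q^-1).
Proof.
split; first exact: hard.
by case=> ->; [exact: id_iso | exact: easy_iso].
Qed.
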